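(* Let $k$ be an algebraically closed field of characteristic not $2$ and let $D(\Lambda_2)$ be the $k$-algebra generated by $x,X,g,G$ subject to $x^2=X^2=0$, $g^2=G^2=1$, $gG=Gg$, $gx=-xg$, $gX=-Xg$, $Gx=-xG$, $GX=-XG$, $xX+Xx=1-gG$. For $\alpha,\beta\in k$ not both zero let $H_{\alpha\beta}$ be the subalgebra of $D(\Lambda_2)$ generated by $g$, $G$ and $\alpha x+\beta X$. Then $D(\Lambda_2)$ is free as a left $H_{\alpha\beta}$-module. *)

(* Defs.v *)
From HB Require Import structures.
From mathcomp Require Import all_boot all_order all_algebra all_field.
Set Implicit Arguments. Unset Strict Implicit. Unset Printing Implicit Defensive.
Import Order.TTheory GRing.Theory Num.Theory.
Local Open Scope ring_scope.

Definition DL2_rel (R : ringType) (x X g G : R) : Prop :=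
  [/\ x * x = 0, X * X = 0, g * g = 1 & G * G = 1] /\
  [/\ g * G = G * g, g * x = - (x * g), g * X = - (X * g),
      G * x = - (x * G) & G * X = - (X * G)] /\
  x * X + X * x = 1 - g * G.

(* (A; x, X, g, G) is the k-algebra presented by generators x,X,g,G and the
   relations DL2_rel: the relations hold, A is generated (as a unital algebra)
   by x,X,g,G, and for every k-algebra B with elements satisfying the
   relations there is a k-algebra morphism A -> B sending generators to them
   (uniqueness follows from generation).  This is the universal property of
   the presented algebra, characterizing it up to isomorphism. *)
Definition is_DLambda2 (K : fieldType) (A : falgType K) (x X g G : A) : Prop :=
  [/\ DL2_rel x X g G,
      agenv (<[x]> + <[X]> + <[g]> + <[G]>)%VS = fullv &
      forall (B : algType K) (x' X' g' G' : B), DL2_rel x' X' g' G' ->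
        exists f : {lrmorphism A -> B},
          [/\ f x = x', f X = X', f g = g' & f G = G']].

(* A is free as a left module over the subalgebra H: it has a (finite) basis
   (e_i) over H, i.e. every a is uniquely a sum  \sum_i h_i * e_i, h_i in H.
   (A is finite dimensional, so a free module over H has a finite basis.) *)
Definition free_left_module (K : fieldType) (A : falgType K) (H : {vspace A}) : Prop :=
  exists (n : nat) (e : 'I_n -> A),
    (forall a : A, exists h : 'I_n -> A,
        (forall i, h i \in H) /\ a = \sum_(i < n) h i * e i) /\
    (forall h : 'I_n -> A, (forall i, h i \in H) ->
        \sum_(i < n) h i * e i = 0 -> forall i, h i = 0).

(* Main.v *)
Require Import Defs.
From HB Require Import structures.
From mathcomp Require Import all_boot all_order all_algebra all_field.
From mathcomp Require Import ring.
Import Order.TTheory GRing.Theory Num.Theory.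
Local Open Scope ring_scope.

Module Aux.
Set Implicit Arguments. Unset Strict Implicit. Unset Printing Implicit Defensive.
Section Model.
Variable k : fieldType.
Definition Idx := (bool * bool * bool * bool)%type.
Definition V := {ffun Idx -> k^o}.
Definition sg (b : bool) : k := if b then -1 else 1.
Definition sc (c d : bool) : k := sg (c (+) d).

Definition ia (i : Idx) := i.1.1.1.
Definition ib (i : Idx) := i.1.1.2.
Definition ic (i : Idx) := i.1.2.
Definition id4 (i : Idx) := i.2.
Definition rg (v : V) : V := [ffun i : Idx => v (ia i, ib i, ~~ ic i, id4 i)].
Definition rG (v : V) : V := [ffun i : Idx => v (ia i, ib i, ic i, ~~ id4 i)].
Definition rX (v : V) : V := [ffun i : Idx =>
   if ib i then (sc (ic i) (id4 i) : k^o) * v (ia i, false, ic i, id4 i) else 0].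
Definition rx (v : V) : V := [ffun i : Idx =>
   let c := ic i in let d := id4 i in
   if ia i then
     (if ib i then - ((sc c d : k^o) * v (false,true,c,d))
      else (sc c d : k^o) * (v (false,false,c,d) + v (true,true,c,d) - v (true,true,~~c,~~d)))
   else
     (if ib i then 0
      else (sc c d : k^o) * (v (false,true,c,d) - v (false,true,~~c,~~d)))].

Lemma scE (r : k) (u : k^o) : r *: u = (r * u : k). Proof. by []. Qed.

Ltac lin_tac := move=> r u w; apply/ffunP=> -[[[[] []] c] d]; rewrite /rg /rG /rX /rx !ffunE /ia /ib /ic /id4 /=; rewrite ?ffunE; rewrite ?scE; ring.





Lemma rg_lin : linear rg. Proof. lin_tac. Qed.
Lemma rG_lin : linear rG. Proof. lin_tac. Qed.
Lemma rX_lin : linear rX. Proof. lin_tac. Qed.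
Lemma rx_lin : linear rx. Proof. lin_tac. Qed.
End Model.
Section Model2.
Variable k : fieldType.
HB.instance Definition _ := GRing.isSemilinear.Build k (V k) (V k) _ (@rg k)
  (GRing.semilinear_linear (@rg_lin k)).
HB.instance Definition _ := GRing.isSemilinear.Build k (V k) (V k) _ (@rG k)
  (GRing.semilinear_linear (@rG_lin k)).
HB.instance Definition _ := GRing.isSemilinear.Build k (V k) (V k) _ (@rX k)
  (GRing.semilinear_linear (@rX_lin k)).
HB.instance Definition _ := GRing.isSemilinear.Build k (V k) (V k) _ (@rx k)
  (GRing.semilinear_linear (@rx_lin k)).

Lemma V_proper : (0 < dim (V k))%N.
Proof. by rewrite /dim /= !card_prod card_bool. Qed.
Definition B := lfun_algType V_proper.
Definition Lg : B := linfun (@rg k).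
Definition LG : B := linfun (@rG k).
Definition LX : B := linfun (@rX k).
Definition Lx : B := linfun (@rx k).
Lemma mulBE (f h : B) v : (f * h) v = h (f v). Proof. by rewrite /= comp_lfunE. Qed.
Lemma oneBE v : (1 : B) v = v. Proof. by rewrite /= id_lfunE. Qed.

Ltac rel_tac := apply/lfunP=> v; rewrite ?(mulBE, oneBE, add_lfunE, opp_lfunE, zero_lfunE, lfunE) /=;
  apply/ffunP=> -[[[[] []] []] []]; rewrite /rg /rG /rX /rx !ffunE /ia /ib /ic /id4 /= ?ffunE /= ?ffunE /=;
  rewrite /sc /sg /=; ring.

Lemma rel1 : Lx * Lx = 0. Proof. rel_tac. Qed.
Lemma rel2 : LX * LX = 0. Proof. rel_tac. Qed.
Lemma rel3 : Lg * Lg = 1. Proof. rel_tac. Qed.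
Lemma rel4 : LG * LG = 1. Proof. rel_tac. Qed.
Lemma rel5 : Lg * LG = LG * Lg. Proof. rel_tac. Qed.
Lemma rel6 : Lg * Lx = - (Lx * Lg). Proof. rel_tac. Qed.
Lemma rel7 : Lg * LX = - (LX * Lg). Proof. rel_tac. Qed.
Lemma rel8 : LG * Lx = - (Lx * LG). Proof. rel_tac. Qed.
Lemma rel9 : LG * LX = - (LX * LG). Proof. rel_tac. Qed.
Lemma rel10 : Lx * LX + LX * Lx = 1 - Lg * LG. Proof. rel_tac. Qed.
End Model2.

Section Model3.
Variable k : fieldType.
Definition e (q : Idx) : V k := [ffun i => if i == q then 1 else 0].
Definition e0 := e (false,false,false,false).
Arguments e0 : clear implicits.

Lemma rg_e q : rg (e q) = e (ia q, ib q, ~~ ic q, id4 q).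
Proof.
apply/ffunP => -[[[a b] c] d]; rewrite !ffunE; case: q => [[[a' b'] c'] d'].
by rewrite /ia /ib /ic /id4 /= !xpair_eqE; case: c; case: c'.
Qed.
Lemma rG_e q : rG (e q) = e (ia q, ib q, ic q, ~~ id4 q).
Proof.
apply/ffunP => -[[[a b] c] d]; rewrite !ffunE; case: q => [[[a' b'] c'] d'].
by rewrite /ia /ib /ic /id4 /= !xpair_eqE; case: d; case: d'.
Qed.
Lemma rX_e (a c d : bool) : rX (e (a,false,c,d)) = sc k c d *: e (a,true,c,d).
Proof.
apply/ffunP => -[[[a' b'] c'] d']; rewrite !ffunE /ia /ib /ic /id4 /= ?ffunE /= !xpair_eqE.
case: b' => /=; rewrite ?andbF ?scE ?mulr0 //.
case: a; case: a'; case: c; case: c'; case: d; case: d'; by rewrite /= ?scE ?mulr0 ?mulr1.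
Qed.
Lemma rX_e1 (a c d : bool) : rX (e (a,true,c,d)) = 0.
Proof.
apply/ffunP => -[[[a' b'] c'] d']; rewrite !ffunE /ia /ib /ic /id4 /= !xpair_eqE.
by case: b' => /=; rewrite ?andbF ?mulr0.
Qed.
Lemma rx_e0 : rx e0 = e (true,false,false,false).
Proof.
apply/ffunP => -[[[[] []] []] []]; rewrite /e0 !ffunE /ia /ib /ic /id4 /= ?ffunE /=;
rewrite /sc /sg /=; ring.
Qed.
Lemma rX_e0 : rX e0 = e (false,true,false,false).
Proof.
apply/ffunP => -[[[[] []] []] []]; rewrite /e0 !ffunE /ia /ib /ic /id4 /= ?ffunE /=;
rewrite /sc /sg /=; ring.
Qed.

Lemma eval_key (al be : k) (a c d : bool) :
 ((al *: Lx k + be *: LX k) ^+ a * Lg k ^+ c * LG k ^+ d * LX k) e0 =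
   (sc k c d * al ^+ a) *: e (a,true,c,d).
Proof.
case: a; case: c; case: d; rewrite ?expr0 ?expr1 ?mul1r ?mulr1;
rewrite ?(mulBE, oneBE, add_lfunE, scale_lfunE, lfunE) /=;
rewrite ?linearD ?linearZ /= ?rx_e0 ?rX_e0 ?rg_e ?rG_e /ia /ib /ic /id4 /=
  ?rX_e ?rX_e1 ?scaler0 ?addr0 ?scalerA //.
all: first [by rewrite scale1r | by congr (_ *: _); rewrite /sc /sg /=; ring].
Qed.
End Model3.

Section Alg.
Variables (k : fieldType) (A : falgType k) (x X g G : A).
Hypothesis hr : DL2_rel x X g G.
Variables (al be : k).
Hypothesis hal : al != 0.

Definition asg (b : bool) : k := if b then -1 else 1.
Definition asc (c d : bool) : k := asg (c (+) d).

Let y := al *: x + be *: X.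
Let H := agenv (<[g]> + <[G]> + <[y]>)%VS.

Lemma r_xx : x * x = 0. Proof. by case: hr => [[]]. Qed.
Lemma r_XX : X * X = 0. Proof. by case: hr => [[]]. Qed.
Lemma r_gg : g * g = 1. Proof. by case: hr => [[]]. Qed.
Lemma r_GG : G * G = 1. Proof. by case: hr => [[]]. Qed.
Lemma r_gG : g * G = G * g. Proof. by case: hr => [_ [[]]]. Qed.
Lemma r_gx : g * x = - (x * g). Proof. by case: hr => [_ [[]]]. Qed.
Lemma r_gX : g * X = - (X * g). Proof. by case: hr => [_ [[]]]. Qed.
Lemma r_Gx : G * x = - (x * G). Proof. by case: hr => [_ [[]]]. Qed.
Lemma r_GX : G * X = - (X * G). Proof. by case: hr => [_ [[]]]. Qed.
Lemma r_xX : x * X + X * x = 1 - g * G. Proof. by case: hr => [_ [_]]. Qed.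

Lemma L_gy : g * y = - (y * g).
Proof. by rewrite /y mulrDr mulrDl -!scalerAr -!scalerAl r_gx r_gX !scalerN opprD. Qed.
Lemma L_Gy : G * y = - (y * G).
Proof. by rewrite /y mulrDr mulrDl -!scalerAr -!scalerAl r_Gx r_GX !scalerN opprD. Qed.
Lemma L_yy : y * y = (al * be) *: (1 - g * G).
Proof.
rewrite /y mulrDr !mulrDl -!scalerAr -!scalerAl !scalerA r_xx r_XX !scaler0 add0r addr0.
by rewrite -r_xX scalerDr mulrC addrC.
Qed.
Lemma L_Xy : X * y = al *: (1 - g * G) - y * X.
Proof.
rewrite /y mulrDr mulrDl -!scalerAr -!scalerAl r_XX !scaler0 !addr0.
by rewrite -r_xX scalerDr addrAC subrr add0r.
Qed.
Lemma L_Xg : X * g = - (g * X). Proof. by rewrite r_gX opprK. Qed.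
Lemma L_XG : X * G = - (G * X). Proof. by rewrite r_GX opprK. Qed.

Definition m (p : bool * bool * bool) : A := y ^+ p.1.1 * (g ^+ p.1.2 * G ^+ p.2).
Let HM := (\sum_p <[m p]>)%VS.

Lemma gy_a (a : bool) : g * y ^+ a = asg a *: (y ^+ a * g).
Proof. by case: a; rewrite /asg ?expr0 ?expr1 ?mulr1 ?mul1r ?scale1r // L_gy scaleN1r. Qed.
Lemma Gy_a (a : bool) : G * y ^+ a = asg a *: (y ^+ a * G).
Proof. by case: a; rewrite /asg ?expr0 ?expr1 ?mulr1 ?mul1r ?scale1r // L_Gy scaleN1r. Qed.
Lemma g_gG (c d : bool) : g * (g ^+ c * G ^+ d) = g ^+ (~~ c) * G ^+ d.
Proof. by case: c; rewrite /= ?expr0 ?expr1 ?mul1r // mulrA r_gg mul1r. Qed.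
Lemma G_gG (c d : bool) : G * (g ^+ c * G ^+ d) = g ^+ c * G ^+ (~~ d).
Proof.
case: c; case: d; rewrite /= ?expr0 ?expr1 ?mul1r ?mulr1 //.
- by rewrite mulrA -r_gG -mulrA r_GG mulr1.
- by rewrite r_gG.
- by rewrite r_GG.
Qed.
Lemma gGgG (c d : bool) : g * G * (g ^+ c * G ^+ d) = g ^+ (~~ c) * G ^+ (~~ d).
Proof. by rewrite -mulrA G_gG g_gG. Qed.
Lemma X_gG (c d : bool) : X * (g ^+ c * G ^+ d) = asc c d *: (g ^+ c * G ^+ d * X).
Proof.
case: c; case: d; rewrite /asc /asg /= ?expr0 ?expr1 ?mul1r ?mulr1 ?scale1r ?scaleN1r //.
- by rewrite mulrA L_Xg mulNr -[g * X * G]mulrA L_XG mulrN opprK mulrA.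
- exact: L_Xg.
- exact: L_XG.
Qed.

Lemma H_gens : [/\ g \in H, G \in H & y \in H].
Proof.
have := sub_agenv (<[g]> + <[G]> + <[y]>)%VS.
by rewrite !subv_add -!memvE => /andP[/andP[-> ->] ->].
Qed.
Lemma H1 : 1 \in H. Proof. by rewrite memvE sub1_agenv. Qed.
Lemma HM_ (u v : A) : u \in H -> v \in H -> u * v \in H.
Proof. by move=> hu hv; apply: memvM. Qed.
Lemma Hexp (t : A) (b : bool) : t \in H -> t ^+ b \in H.
Proof. by case: b => ht; rewrite ?expr0 ?expr1 ?H1. Qed.
Lemma m_H p : m p \in H.
Proof. case: H_gens => hg hG hy; by rewrite /m !HM_ ?Hexp. Qed.

Lemma gH : g \in H. Proof. by case: H_gens. Qed.
Lemma GH : G \in H. Proof. by case: H_gens. Qed.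
Lemma yH : y \in H. Proof. by case: H_gens. Qed.

Lemma m_HM p : m p \in HM.
Proof. by apply: (subvP (sumv_sup p isT (subvv _))); apply: memv_line. Qed.

Lemma HM_coef h : h \in HM -> exists c : bool * bool * bool -> k, h = \sum_p c p *: m p.
Proof.
move/memv_sumP=> [vs Hvs ->].
have /fin_all_exists [c Hc] : forall p, exists r, vs p = r *: m p.
  by move=> p; apply/vlineP/Hvs.
by exists c; apply: eq_bigr => p _; exact: Hc.
Qed.

Lemma line_mul (t : A) (W : {vspace A}) :
  (forall p, t * m p \in W) -> (<[t]> * HM <= W)%VS.
Proof.
move=> ht; apply/prodvP => u v /vlineP[r ->] /HM_coef[c ->].
rewrite -scalerAl memvZ // mulr_sumr; apply: rpred_sum => p _.
by rewrite -scalerAr memvZ.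
Qed.

Lemma m_def (a c d : bool) : m (a, c, d) = y ^+ a * (g ^+ c * G ^+ d).
Proof. by []. Qed.

Lemma H_HM : (H <= HM)%VS.
Proof.
apply: agenv_sub_modl.
  by rewrite -memvE; have := m_HM (false, false, false); rewrite m_def !expr0 !mul1r.
rewrite !prodvDl !subv_add; apply/andP; split; first (apply/andP; split).
- apply: line_mul => -[[a c] d]; rewrite m_def mulrA gy_a -scalerAl -mulrA g_gG.
  by rewrite memvZ // -m_def m_HM.
- apply: line_mul => -[[a c] d]; rewrite m_def mulrA Gy_a -scalerAl -mulrA G_gG.
  by rewrite memvZ // -m_def m_HM.
- apply: line_mul => -[[a c] d]; rewrite m_def; case: a.
    rewrite expr1 mulrA L_yy -scalerAl mulrBl mul1r gGgG memvZ // memvB //.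
      by have := m_HM (false, c, d); rewrite m_def expr0 mul1r.
    by have := m_HM (false, ~~ c, ~~ d); rewrite m_def expr0 mul1r.
  by have := m_HM (true, c, d); rewrite m_def /= expr0 expr1 mul1r.
Qed.

Let S := (H + amulr X @: H)%VS.

Lemma S_mem u v : u \in H -> v \in H -> u + v * X \in S.
Proof.
move=> hu hv; apply: memv_add => //.
have -> : v * X = amulr X v by rewrite lfunE.
exact: memv_img.
Qed.

Lemma S_P w : w \in S -> exists u v, [/\ u \in H, v \in H & w = u + v * X].
Proof.
move/memv_addP=> [u hu [w' /memv_imgP[v hv ->] ->]].
by exists u, v; split => //; rewrite lfunE.
Qed.

Lemma H0 : (0 : A) \in H. Proof. exact: mem0v. Qed.

Lemma XH h : h \in H -> X * h \in S.
Proof.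
move=> /(subvP H_HM) /HM_coef[c ->]; rewrite mulr_sumr; apply: rpred_sum => p _.
rewrite -scalerAr memvZ //; case: p => -[a cc] d; rewrite m_def; case: a => /=.
  rewrite expr1 mulrA L_Xy mulrBl -mulrA X_gG -scalerAl mulrBl mul1r gGgG -scalerAr.
  rewrite !mulrA scalerAl -[- (_ * X)]mulNr; apply: S_mem.
    by rewrite memvZ // memvB // HM_ ?Hexp ?gH ?GH.
  by rewrite rpredN memvZ // !HM_ ?Hexp ?gH ?GH ?yH.
rewrite expr0 mul1r X_gG scalerAl -[X in X \in _]add0r; apply: S_mem; first exact: H0.
by rewrite memvZ // !HM_ ?Hexp ?gH ?GH ?yH.
Qed.

Lemma HS t w : t \in H -> w \in S -> t * w \in S.
Proof.
move=> ht /S_P[u [v [hu hv ->]]]; rewrite mulrDr mulrA.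
by apply: S_mem; apply: HM_.
Qed.

Lemma XS w : w \in S -> X * w \in S.
Proof.
move=> /S_P[u [v [hu hv ->]]]; rewrite mulrDr; apply: rpredD; first exact: XH.
have /S_P[u' [v' [hu' hv' E]]] := XH hv.
rewrite mulrA E mulrDl -mulrA r_XX mulr0 addr0 -[X in X \in _]add0r.
by apply: S_mem => //; exact: H0.
Qed.

Lemma x_def : x = al^-1 *: (y - be *: X).
Proof. by rewrite /y addrK scalerA mulVf // scale1r. Qed.

Lemma xS w : w \in S -> x * w \in S.
Proof.
move=> hw; rewrite x_def -scalerAl memvZ // mulrBl -scalerAl.
by rewrite rpredB ?memvZ ?XS // HS // yH.
Qed.

Lemma gen_line (t : A) : (forall w, w \in S -> t * w \in S) -> (<[t]> * S <= S)%VS.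
Proof.
by move=> ht; apply/prodvP => u w /vlineP[r ->] hw; rewrite -scalerAl memvZ // ht.
Qed.

Lemma spanS : (agenv (<[x]> + <[X]> + <[g]> + <[G]>) <= S)%VS.
Proof.
apply: agenv_sub_modl.
  rewrite -memvE -[1]addr0 -[X in _ + X](mul0r X); apply: S_mem; [exact: H1|exact: H0].
rewrite !prodvDl !subv_add !gen_line //.
- by move=> w; apply: HS; apply: GH.
- by move=> w; apply: HS; apply: gH.
- exact: XS.
- exact: xS.
Qed.

Lemma ffZ (r : k) (F : V k) i : (r *: F) i = r * F i.
Proof. by rewrite ffunE. Qed.

Lemma uniqX (f : {lrmorphism A -> B k}) (hfx : f x = Lx k) (hfX : f X = LX k)
  (hfg : f g = Lg k) (hfG : f G = LG k) h : h \in H -> h * X = 0 -> h = 0.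
Proof.
have fmX : forall p, f (m p * X) (e0 k) =
    (sc k p.1.2 p.2 * al ^+ p.1.1) *: e k (p.1.1, true, p.1.2, p.2).
  move=> [[a c] d]; rewrite /m /= !rmorphM !rmorphXn /= hfX hfg hfG /y linearD !linearZ /=.
  by rewrite hfx hfX -(eval_key al be) !mulrA.
move=> /(subvP H_HM)/HM_coef[c ->] h0.
have hs : f ((\sum_p c p *: m p) * X) = 0 by rewrite h0 rmorph0.
move: hs; rewrite mulr_suml linear_sum /= => hs.
suff hc : forall p, c p = 0 by apply: big1 => p _; rewrite hc scale0r.
move=> [[a0 c0] d0].
have := congr1 (fun F : B k => F (e0 k) (a0, true, c0, d0)) hs.
rewrite /= sum_lfunE sum_ffunE (bigD1 (a0, c0, d0)) //= big1 ?addr0.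
- rewrite -scalerAl linearZ /= scale_lfunE fmX /= !ffZ /e ffunE eqxx mulr1.
  rewrite zero_lfunE ffunE; move/eqP; rewrite mulf_eq0 => /orP[/eqP // |]; rewrite mulf_eq0 expf_eq0 (negPf hal) andbF orbF.
  by rewrite /sc /sg; case: (c0 (+) d0); rewrite ?oppr_eq0 oner_eq0.
- move=> [[a c1] d] hp; rewrite -scalerAl linearZ /= scale_lfunE fmX /= !ffZ /e ffunE.
  by move: hp; case: a; case: c1; case: d; case: a0; case: c0; case: d0; rewrite /= ?mulr0.
Qed.

Lemma rel_B : DL2_rel (Lx k) (LX k) (Lg k) (LG k).
Proof.
split; first by split; [exact: rel1|exact: rel2|exact: rel3|exact: rel4].
split; first by split; [exact: rel5|exact: rel6|exact: rel7|exact: rel8|exact: rel9].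
exact: rel10.
Qed.

Lemma main_al (hgen : agenv (<[x]> + <[X]> + <[g]> + <[G]>)%VS = fullv)
  (huniv : forall (B : algType k) (x' X' g' G' : B), DL2_rel x' X' g' G' ->
        exists f : {lrmorphism A -> B},
          [/\ f x = x', f X = X', f g = g' & f G = G']) :
  free_left_module H.
Proof.
have [f [hfx hfX hfg hfG]] := huniv (B k) (Lx k) (LX k) (Lg k) (LG k) rel_B.
have hU := uniqX hfx hfX hfg hfG.
exists 2%N, (fun i : 'I_2 => X ^+ i); split.
  move=> a; have ha : a \in S by apply: (subvP spanS); rewrite hgen memvf.
  have [u [v [hu hv ->]]] := S_P ha.
  exists (fun i : 'I_2 => if (i : nat) == 0%N then u else v); split.
    by move=> i; case: ifP.
  by rewrite !big_ord_recl big_ord0 /= expr0 expr1 mulr1 addr0.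
move=> h hH; rewrite !big_ord_recl big_ord0 /= expr0 mulr1 addr0.
set h0 := h ord0; set h1 := h _ => hs.
have e0' : h0 = 0.
  apply: hU; first exact: hH.
  have := congr1 (fun w => w * X) hs; rewrite mulrDl -mulrA expr1 r_XX mulr0 addr0 mul0r.
  by [].
have e1' : h1 = 0.
  apply: hU; first exact: hH.
  by move: hs; rewrite e0' add0r expr1.
case=> -[|[|//]] Hi.
  by rewrite -e0' /h0; congr h; apply: val_inj.
by rewrite -e1' /h1; congr h; apply: val_inj.
Qed.
End Alg.

End Aux.
Import Aux.

Lemma swap_rel (R : ringType) (a b c d : R) : DL2_rel a b c d -> DL2_rel b a c d.
Proof.
case=> -[h1 h2 h3 h4] [[h5 h6 h7 h8 h9] h10].
by split; [split|split; [split|rewrite addrC]].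
Qed.

Theorem mainTheorem5 (k : closedFieldType) (hchar : 2%N \notin [pchar k])
  (A : falgType k) (x X g G : A) (hA : is_DLambda2 x X g G)
  (alpha beta : k) (hab : (alpha != 0) || (beta != 0)) :
  free_left_module (agenv (<[g]> + <[G]> + <[alpha *: x + beta *: X]>)%VS).
Proof.
case: hA => hr hgen huniv.
case/orP: hab => [hal|hbe].
  exact: (main_al hr beta hal hgen huniv).
have hgen' : agenv (<[X]> + <[x]> + <[g]> + <[G]>)%VS = fullv.
  by rewrite (addvC <[X]>%VS).
have huniv' : forall (B : algType k) (x' X' g' G' : B), DL2_rel x' X' g' G' ->
        exists f : {lrmorphism A -> B}, [/\ f X = x', f x = X', f g = g' & f G = G'].
  move=> B x' X' g' G' /swap_rel hr'.
  have [f [f1 f2 f3 f4]] := huniv B X' x' g' G' hr'.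
  by exists f; split.
have := main_al (@swap_rel _ _ _ _ _ hr) alpha hbe hgen' huniv'.
by rewrite addrC.
Qed.
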